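(* Let $S=\{s_1<\dots<s_{k_1}\}$ and $T=\{t_1<\dots<t_{k_2}\}$ be nonempty subsets of $\{1,\dots,n-1\}$, $d=\gcd\{s+t: s\in S,t\in T\}$, $\mathcal{I}_n=\{-n+1,\dots,n-1\}$, and for positive integers $i$ let $P_i=\{\ell\in\mathcal{I}_n: \ell\equiv is_1\pmod d\}$ and $Q_i=\{\sum_{j=1}^{k_1}a_js_j-\sum_{j=1}^{k_2}b_jt_j\in\mathcal{I}_n : a_j,b_j\in\mathbb{Z}_{\ge0},\ \sum_ja_j+\sum_jb_j=i\}$. Then there exists a positive integer $m^\star$ such that $P_{m^\star}\subseteq Q_{m^\star}$. *)

(* Defs.v *)
From mathcomp Require Import all_boot all_order all_algebra.
Set Implicit Arguments. Unset Strict Implicit. Unset Printing Implicit Defensive.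
Import Order.TTheory GRing.Theory Num.Theory.

Definition In_n (n : nat) (l : int) : bool :=
  ((- (n%:Z) < l) && (l < n%:Z))%R.

(* d = gcd { s + t : s in S, t in T }; S, T are subsets of {0..n-1}
   (the theorem additionally requires 0 not in S, T). *)
Definition dST (n : nat) (S T : {set 'I_n}) : nat :=
  \big[gcdn/0%N]_(p in setX S T) (p.1 + p.2)%N.

Definition Pset (n : nat) (S T : {set 'I_n}) (s1 i : nat) (l : int) : Prop :=
  In_n n l /\ (l = (i * s1)%N%:Z %[mod (dST S T)%:Z])%Z.

Definition Qset (n : nat) (S T : {set 'I_n}) (i : nat) (l : int) : Prop :=
  In_n n l /\
  exists (a b : 'I_n -> nat),
    (\sum_(j in S) a j + \sum_(j in T) b j)%N = i /\
    l = (\sum_(j in S) (a j * j)%N%:Z - \sum_(j in T) (b j * j)%N%:Z)%R.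

(* Main.v *)
Require Import Defs.
From mathcomp Require Import all_boot all_order all_algebra.
From mathcomp Require Import zify ring lra.
Import Order.TTheory GRing.Theory Num.Theory.

Section Helpers.
Local Open Scope ring_scope.

Lemma bez_seq (I : eqType) (r : seq I) (F : I -> nat) : uniq r ->
  exists c : I -> int,
   ((\big[gcdn/0%N]_(i <- r) F i)%:Z = \sum_(i <- r) c i * (F i)%:Z).
Proof.
elim: r => [|x r IH] /=.
  by move=> _; exists (fun _ => 0); rewrite !big_nil.
move/andP=> [xr ur]; have [c Hc] := IH ur.
have [u [v Huv]] := Bezoutz (F x)%:Z (\big[gcdn/0%N]_(i <- r) F i)%:Z.
exists (fun i => if i == x then u else v * c i).
rewrite !big_cons eqxx.
have -> : ((gcdn (F x) (\big[gcdn/0%N]_(i <- r) F i))%:Z) =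
   gcdz (F x)%:Z (\big[gcdn/0%N]_(i <- r) F i)%:Z by [].
rewrite -Huv Hc mulr_sumr; congr (_ + _).
apply: eq_big_seq => i ir.
have -> : (i == x) = false by apply/eqP => E; move: xr; rewrite -E ir.
by rewrite mulrA.
Qed.

Lemma adjust (I : finType) (A : {set I}) (y c : I -> int) (g0 X d c0 : int) :
  0 < g0 -> d = c0 * g0 + X + \sum_(i in A) c i * y i ->
  exists c0' (c' : I -> int), (forall i, 0 <= c' i) /\
     d = c0' * g0 + X + \sum_(i in A) c' i * y i.
Proof.
move=> g0p ->.
exists (c0 - \sum_(i in A) `|c i| * y i), (fun i => c i + `|c i| * g0).
split.
  move=> i; have h1 : - c i <= `|c i| by rewrite -normrN ler_norm.
  have h2 := normr_ge0 (c i). nia.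
have -> : \sum_(i in A) (c i + `|c i| * g0) * y i =
   \sum_(i in A) (c i * y i + g0 * (`|c i| * y i)).
  by apply: eq_bigr => i _; ring.
rewrite big_split /= -mulr_sumr. ring.
Qed.

Lemma aux1 (q g R N K n : int) : N = q * g + R -> R < g -> 0 < g -> g <= 2 * n ->
  0 <= K -> 2 * n + 4 * n * n * K <= N -> g * K <= q.
Proof.
move=> HN Rg g0 gn K0 NL.
rewrite leNgt; apply/negP => H.
have H1 : q <= g * K - 1 by lia.
have H2 : q * g <= (g * K - 1) * g by rewrite ler_wpM2r // ltW.
have H3 : g * g <= 4 * n * n by nia.
have H4 : g * K * g <= 4 * n * n * K by nia.
nia.
Qed.
Lemma aux2 (SP SQ N X s r g n m E K l : int) :
  (s + 1) * SP <= N + X -> X <= n * SQ -> SQ = r * E -> 0 <= r -> r <= g -> g <= 2 * n ->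
  s + 1 <= n -> N = m * s - l -> - n < l -> 
  m = 3 * n + 4 * n * n * K + 4 * n * n * E + 1 -> 0 <= SP -> 0 <= E -> 0 <= K -> 0 <= s ->
  SP + SQ <= m.
Proof.
move=> H1 H2 H3 r0 rg gn sn HN Hl Hm SP0 E0 K0 s0.
have SQb : SQ <= 2 * n * E by rewrite H3; nia.
have SQ0 : 0 <= SQ by rewrite H3; nia.
have H4 : (s + 1) * SQ <= n * SQ by nia.
have H5 : n * SQ <= 2 * n * n * E by nia.
have H6 : (s + 1) * (SP + SQ) <= (s + 1) * m by nia.
nia.
Qed.

Lemma aux3 (N m s l n K E : int) : N = m * s - l -> l < n -> 1 <= s ->
  m = 3 * n + 4 * n * n * K + 4 * n * n * E + 1 -> 0 <= n -> 0 <= K -> 0 <= E ->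
  2 * n + 4 * n * n * K <= N.
Proof.
move=> HN Hl s1 Hm n0 K0 E0.
have : m <= m * s by nia.
nia.
Qed.

Lemma aux_g (a b c : nat) : (a < c)%N -> (b < c)%N -> a%:Z + b%:Z <= 2 * c%:Z.
Proof. lia. Qed.
Lemma aux_abs (x : int) : - (absz x)%:Z <= x.
Proof. lia. Qed.
Lemma aux_p (x y z q gK : int) : - x <= y -> x <= gK -> 0 <= z -> gK <= q -> 0 <= z + (q + y).
Proof. lia. Qed.

End Helpers.
Section H2.
Local Open Scope ring_scope.
Lemma sum_absz (I : finType) (A : {pred I}) (f : I -> int) : (forall i, 0 <= f i) ->
  ((\sum_(i in A) absz (f i))%N)%:Z = \sum_(i in A) f i.
Proof.
move=> f0; rewrite (big_morph Posz PoszD (erefl (Posz 0))).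
by apply: eq_bigr => i _; rewrite abszE ger0_norm.
Qed.
Lemma sum_natz (I : finType) (A : {pred I}) (f : I -> nat) :
  ((\sum_(i in A) f i)%N)%:Z = \sum_(i in A) (f i)%:Z.
Proof. by rewrite (big_morph Posz PoszD (erefl (Posz 0))). Qed.
Lemma aux_w (a b c : nat) : (a < c)%N -> a%:Z - b%:Z <= c%:Z.
Proof. lia. Qed.
Lemma aux_lt (a c : nat) : (a < c)%N -> a%:Z + 1 <= c%:Z.
Proof. lia. Qed.
Lemma aux_n (a b m : nat) : (a + b <= m)%N -> (b + (m - (a + b)) + a = m)%N.
Proof. lia. Qed.
End H2.

Theorem theorem4p3 (n : nat) (S T : {set 'I_n}) (s1 : nat) :
  S != set0 -> T != set0 ->
  (forall j : 'I_n, j \in S -> (0 < j)%N) ->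
  (forall j : 'I_n, j \in T -> (0 < j)%N) ->
  s1 \in [seq val j | j in S] ->
  (forall j : 'I_n, j \in S -> (s1 <= j)%N) ->
  exists m : nat, (0 < m)%N /\ (forall l : int, Pset S T s1 m l -> Qset S T m l).
Proof.
Local Open Scope ring_scope.
move=> _ /set0Pn [t1 t1T] Spos Tpos /imageP [js1 js1S ->] s1min.
set s0 := val js1.
have [c Hc] := @bez_seq _ (enum (setX S T)) (fun p : 'I_n * 'I_n => (p.1 + p.2)%N) (enum_uniq _).
rewrite !big_enum /= in Hc.
set d := dST S T.
have {Hc} Hd : d%:Z = \sum_(p in setX S T) c p * ((p.1 + p.2)%N)%:Z by exact: Hc.
set w := fun i : 'I_n => (i : nat)%:Z - s0%:Z.
set u := fun j : 'I_n => (s0 + j)%N%:Z.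
have Hd2 : d%:Z = \sum_(i in S) (\sum_(j in T) c (i, j)) * w i + \sum_(j in T) (\sum_(i in S) c (i, j)) * u j.
  have pairX : forall F : 'I_n * 'I_n -> int,
      \sum_(p in setX S T) F p = \sum_(i in S) \sum_(j in T) F (i, j).
    move=> F; rewrite pair_big; apply: eq_big => [[i j]|[i j] _] //=.
    by rewrite in_setX.
  rewrite Hd pairX.
  have -> : \sum_(i in S) \sum_(j in T) c (i, j) * ((i + j)%N)%:Z =
     \sum_(i in S) (\sum_(j in T) c (i, j) * w i + \sum_(j in T) c (i, j) * u j).
    apply: eq_bigr => i _; rewrite -big_split; apply: eq_bigr => j _ /=.
    rewrite /w /u; rewrite !PoszD; ring.
  rewrite big_split /=; congr (_ + _).
    by apply: eq_bigr => i _; rewrite mulr_suml.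
  rewrite exchange_big; apply: eq_bigr => j _; by rewrite mulr_suml.
have g0p : 0 < u t1 by rewrite /u ltz_nat; have := Tpos t1 t1T; lia.
have [ca [al [alp Hd3]]] := @adjust _ T u (fun j => \sum_(i in S) c (i, j))
   (u t1) (\sum_(i in S) (\sum_(j in T) c (i, j)) * w i) d%:Z 0 g0p
   ltac:(rewrite Hd2; ring).
have [cb [be [bep Hd4]]] := @adjust _ S (fun i => - w i)
   (fun i => - \sum_(j in T) c (i, j))
   (u t1) (\sum_(j in T) al j * u j) d%:Z ca g0p
   ltac:(rewrite Hd3; rewrite (@eq_bigr _ _ _ _ _ _ (fun i => (- \sum_(j in T) c (i, j)) * - w i) (fun i => (\sum_(j in T) c (i, j)) * w i)); [ring| by move=> i _; rewrite mulrNN]).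
have {Hd4} Hd : d%:Z = cb * u t1 + \sum_(j in T) al j * u j - \sum_(i in S) be i * w i.
  rewrite Hd4; congr (_ + _).
  by rewrite -sumrN; apply: eq_bigr => i _ /=; rewrite mulrN.
clear Hd2 Hd3.
have dg : (d %| s0 + t1)%N.
  by rewrite /d /dST (biggcdn_inf (js1, t1)) // in_setX js1S t1T.
have dpos : (0 < d)%N.
  move: dg; case: (posnP d) => [->|//]; rewrite dvd0n; have := Tpos t1 t1T; lia.
set K := absz cb.
set E := absz (\sum_(i in S) be i).
exists (3 * n + 4 * n * n * K + 4 * n * n * E + 1)%N; split; first lia.
set m := (3 * n + 4 * n * n * K + 4 * n * n * E + 1)%N.
move=> l [Hl Hmod].
have : ((m * s0)%N%:Z == l %[mod d%:Z])%Z by rewrite Hmod.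
rewrite eqz_mod_dvd => /dvdzP [k Hk].
have /dvdzP [h Hh] : (d%:Z %| u t1)%Z by exact: dg.
set N := (m * s0)%N%:Z - l in Hk.
set g := u t1 in Hh g0p Hd *.
set q := (N %/ g)%Z.
set R := (N %% g)%Z.
have HN : N = q * g + R by exact: divz_eq.
have R0 : 0 <= R by apply: modz_ge0; rewrite gt_eqF.
have Rg : R < g by apply: ltz_pmod.
set r := k - q * h.
have Rr : R = r * d%:Z by rewrite /r; nia.
have d1 : 1 <= d%:Z by rewrite lez_nat.
have r0 : 0 <= r.
  have : 0 <= r * d%:Z by rewrite -Rr.
  by rewrite pmulr_lge0 // ltz_nat.
have rR : r <= R by rewrite Rr -{1}(mulr1 r) ler_wpM2l.
have s0n : (s0 < n)%N by exact: ltn_ord.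
have t1n : (t1 < n)%N by exact: ltn_ord.
have s0pos : (0 < s0)%N by exact: Spos.
have gE : g = s0%:Z + (t1 : nat)%:Z by rewrite /g /u PoszD.
move: Hl; rewrite /In_n => /andP [Hl1 Hl2].
have NE : N = m%:Z * s0%:Z - l by rewrite /N PoszM.
have mE : m%:Z = 3 * n%:Z + 4 * n%:Z * n%:Z * K%:Z + 4 * n%:Z * n%:Z * E%:Z + 1.
  by rewrite /m !PoszD !PoszM.
have Kp : 0 <= K%:Z by [].
have Ep : 0 <= E%:Z by [].
have qK : g * K%:Z <= q.
  apply: (@aux1 q g R N K%:Z n%:Z HN Rg g0p _ Kp).
    by rewrite gE; apply: aux_g.
  apply: (@aux3 N m%:Z s0%:Z l n%:Z K%:Z E%:Z NE Hl2 _ mE) => //; rewrite lez_nat.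
have cbK : - K%:Z <= cb by exact: aux_abs.
set p := fun j : 'I_n => r * al j + (if j == t1 then q + r * cb else 0).
set qq := fun i : 'I_n => r * be i.
have p0 : forall j, 0 <= p j.
  move=> j; rewrite /p; have := alp j; case: (j == t1) => H.
    have h1 : - (r * K%:Z) <= r * cb by rewrite -mulrN ler_wpM2l.
    have h2 : r * K%:Z <= g * K%:Z by rewrite ler_wpM2r // (le_trans rR) // ltW.
    have h3 : 0 <= r * al j by rewrite mulr_ge0.
    exact: aux_p h1 h2 h3 qK.
  by rewrite addr0 mulr_ge0.
have qq0 : forall i, 0 <= qq i by move=> i; rewrite /qq mulr_ge0.
have sumP : \sum_(j in T) p j * u j = r * \sum_(j in T) al j * u j + (q + r * cb) * g.
  have e : forall j, p j * u j = r * (al j * u j) + (if j == t1 then (q + r * cb) * u j else 0).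
    by move=> j; rewrite /p; case: (j == t1); ring.
  rewrite (eq_bigr _ (fun j _ => e j)) big_split /= -mulr_sumr; congr (_ + _).
  by rewrite (bigD1 t1) //= eqxx big1 ?addr0 // => j /andP [_ /negbTE ->].
have sumQ : \sum_(i in S) qq i * w i = r * \sum_(i in S) be i * w i.
  by rewrite mulr_sumr; apply: eq_bigr => i _; rewrite /qq mulrA.
have key : N = \sum_(j in T) p j * u j - \sum_(i in S) qq i * w i.
  by rewrite sumP sumQ HN Rr Hd; ring.
set SP := \sum_(j in T) p j.
set SQ := \sum_(i in S) qq i.
have SQE : SQ = r * E%:Z.
  rewrite /SQ /qq -mulr_sumr /E abszE ger0_norm //.
  by apply: sumr_ge0 => i _.
have Xb : \sum_(i in S) qq i * w i <= n%:Z * SQ.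
  rewrite /SQ mulr_sumr; apply: ler_sum => i iS; rewrite [n%:Z * _]mulrC ler_wpM2l ?qq0 //.
  exact: aux_w.
have Pb : (s0%:Z + 1) * SP <= \sum_(j in T) p j * u j.
  rewrite /SP mulr_sumr; apply: ler_sum => j jT; rewrite mulrC ler_wpM2l ?p0 //.
  by rewrite /u PoszD lerD2l lez_nat; apply: Tpos.
have Hb : SP + SQ <= m%:Z.
  apply: (@aux2 SP SQ N (\sum_(i in S) qq i * w i) s0%:Z r g n%:Z m%:Z E%:Z K%:Z l) => //.
  - by rewrite key subrK.
  - exact: (le_trans rR (ltW Rg)).
  - by rewrite gE; apply: aux_g.
  - exact: aux_lt.
  - by apply: sumr_ge0 => j _.
set SPn := (\sum_(j in T) absz (p j))%N.
set SQn := (\sum_(i in S) absz (qq i))%N.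
have SPnE : SPn%:Z = SP by exact: sum_absz.
have SQnE : SQn%:Z = SQ by exact: sum_absz.
have Hbn : (SPn + SQn <= m)%N by rewrite -lez_nat PoszD SPnE SQnE.
set Rm := (m - (SPn + SQn))%N.
split; first by rewrite /In_n Hl1 Hl2.
exists (fun i => absz (qq i) + (if i == js1 then Rm else 0))%N, (fun j => absz (p j)).
split.
  have ifsum : (\sum_(i in S) (if i == js1 then Rm else 0))%N = Rm.
    by rewrite (bigD1 js1) //= ?eqxx big1 ?addn0 // => i /andP [_ /negbTE ->].
  by rewrite big_split /= ifsum -/SQn -/SPn; apply: aux_n.
have e1 : \sum_(i in S) ((absz (qq i) + (if i == js1 then Rm else 0)) * i)%N%:Z =
    \sum_(i in S) qq i * (i : nat)%:Z + Rm%:Z * s0%:Z.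
  have e : forall i : 'I_n, ((absz (qq i) + (if i == js1 then Rm else 0)) * i)%N%:Z =
     qq i * (i : nat)%:Z + (if i == js1 then Rm%:Z * (i : nat)%:Z else 0).
    move=> i; rewrite PoszM PoszD abszE ger0_norm ?qq0 //.
    by case: (i == js1); rewrite ?mulr0 ?mul0r ?addr0 // mulrDl.
  rewrite (eq_bigr _ (fun i _ => e i)) big_split /=; congr (_ + _).
  by rewrite (bigD1 js1) //= ?eqxx big1 ?addr0 // => i /andP [_ /negbTE ->].
have e2 : \sum_(j in T) ((absz (p j)) * j)%N%:Z = \sum_(j in T) p j * (j : nat)%:Z.
  by apply: eq_bigr => j _; rewrite PoszM abszE ger0_norm ?p0.
have e3 : \sum_(j in T) p j * u j = s0%:Z * SP + \sum_(j in T) p j * (j : nat)%:Z.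
  rewrite /SP mulr_sumr -big_split; apply: eq_bigr => j _ /=.
  by rewrite /u PoszD; ring.
have e4 : \sum_(i in S) qq i * w i = \sum_(i in S) qq i * (i : nat)%:Z - s0%:Z * SQ.
  rewrite /SQ mulr_sumr -sumrB; apply: eq_bigr => i _ /=.
  by rewrite /w; ring.
have e5 : Rm%:Z = m%:Z - SP - SQ.
  by rewrite /Rm -subzn // PoszD SPnE SQnE opprD addrA.
rewrite e1 e2 e5.
have : l = m%:Z * s0%:Z - N by rewrite NE; ring.
rewrite key e3 e4 => ->.
ring.
Qed.
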